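(* For integers $r_1\le s_1<0$ and $r_2\le s_2<0$, $\mathfrak n(V_{r_1s_1},V_{r_2s_2})=0$ if and only if $s_2<s_1$ or $r_2<r_1$; and $\mathfrak n(V_{rs},V_{rs})=\mathbb K\,\mathrm{Id}$.
   Context: $V_{rs}=\bigoplus_{i=r}^sE_i$ with $\dim E_i=1$ in degree $i$, and $\delta_{rs}$ maps $E_i$ onto $E_{i-1}$ ($r<i\le s$) and $E_r$ to $0$. Each $V_{rs}$ is made an irreducible $\mathfrak{sl}_2$-module via an $\mathfrak{sl}_2$-triple $(\delta_{rs},H,Y)$ in $\mathfrak{gl}(V_{rs})$ with $H$ of degree $0$, $Y$ of degree $1$, $[H,\delta_{rs}]=2\delta_{rs}$, $[H,Y]=-2Y$, $[\delta_{rs},Y]=H$. $\operatorname{Hom}(V_{r_1s_1},V_{r_2s_2})$ carries the induced $\mathfrak{sl}_2$-module structure and grading (degree $k$ maps send $E_i$ to $E_{i+k}$); $\mathfrak n(V_{r_1s_1},V_{r_2s_2})$ is its maximal $\mathfrak{sl}_2$-submodule contained in the sum of components of nonnegative degree. *)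

(* Defs.v *)
From HB Require Import structures.
From mathcomp Require Import all_boot all_order all_algebra.
Set Implicit Arguments. Unset Strict Implicit. Unset Printing Implicit Defensive.
Import Order.TTheory GRing.Theory Num.Theory.
Local Open Scope ring_scope.

(* V_{rs} = (+)_{i=r}^s E_i is modelled as column vectors K^(dimV r s);
   the j-th basis vector (j : 'I_(dimV r s)) spans E_{r+j}, of degree r + j. *)
Definition dimV (r s : int) : nat := (absz (s - r)).+1.

(* delta maps E_i onto E_{i-1} (basis e_j |-> e_{j-1}) and E_r to 0. *)
Definition delta (K : fieldType) (n : nat) : 'M[K]_n :=
  \matrix_(i < n, j < n) ((i.+1 == j :> nat)%:R : K).

(* (delta, H, Y) is an sl2-triple in gl(V) with H of degree 0, Y of degree 1. *)
Definition sl2_triple (K : fieldType) (n : nat) (H Y : 'M[K]_n) : Prop :=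
  [/\ (forall i j : 'I_n, i != j -> H i j = 0),
      (forall i j : 'I_n, (i : nat) != j.+1 -> Y i j = 0),
      H *m delta K n - delta K n *m H = delta K n *+ 2,
      H *m Y - Y *m H = - (Y *+ 2) &
      delta K n *m Y - Y *m delta K n = H].

Definition hom_act (K : fieldType) (n1 n2 : nat) (A1 : 'M[K]_n1) (A2 : 'M[K]_n2)
  (f : 'M[K]_(n2, n1)) : 'M[K]_(n2, n1) := A2 *m f - f *m A1.

(* f lies in the sum of the components of nonnegative degree of
   Hom(V_{r1 s1}, V_{r2 s2}): the entry f i j (from E_{r1+j} to E_{r2+i})
   has degree (r2+i)-(r1+j), and negative-degree entries vanish. *)
Definition nonneg_deg (K : fieldType) (r1 r2 : int) (n1 n2 : nat)
  (f : 'M[K]_(n2, n1)) : Prop :=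
  forall (i : 'I_n2) (j : 'I_n1), r2 + (i : nat)%:Z < r1 + (j : nat)%:Z -> f i j = 0.

Definition sl2_submodule (K : fieldType) (n1 n2 : nat)
  (H1 Y1 : 'M[K]_n1) (H2 Y2 : 'M[K]_n2) (S : 'M[K]_(n2, n1) -> Prop) : Prop :=
  [/\ S 0,
      (forall f g, S f -> S g -> S (f + g)),
      (forall (c : K) f, S f -> S (c *: f)) &
      (forall f, S f ->
         [/\ S (hom_act (delta K n1) (delta K n2) f),
             S (hom_act H1 H2 f) &
             S (hom_act Y1 Y2 f)])].

(* Membership in n(V1, V2), the maximal sl2-submodule contained in the
   nonnegative-degree part: it is the union of all such submodules. *)
Definition in_frak_n (K : fieldType) (r1 s1 r2 s2 : int)
  (H1 Y1 : 'M[K]_(dimV r1 s1)) (H2 Y2 : 'M[K]_(dimV r2 s2))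
  (f : 'M[K]_(dimV r2 s2, dimV r1 s1)) : Prop :=
  exists S, [/\ sl2_submodule H1 Y1 H2 Y2 S,
               (forall g, S g -> nonneg_deg r1 r2 g) & S f].
Arguments in_frak_n {K} r1 s1 r2 s2 H1 Y1 H2 Y2 f.

(* Main.v *)
Require Import Defs.
From HB Require Import structures.
From mathcomp Require Import all_boot all_order all_algebra.
Import Order.TTheory GRing.Theory Num.Theory.
Local Open Scope ring_scope.
From mathcomp Require Import zify ring.
Set Implicit Arguments. Unset Strict Implicit.

Section Gen.
Variable K : fieldType.

Lemma sum_delta_l m (F : 'I_m.+1 -> K) c :
  \sum_(l < m.+1) (c == l :> nat)%:R * F l = if (c < m.+1)%N then F (inord c) else 0.
Proof.
case: ltnP => hc.
  rewrite (bigD1 (inord c)) //= inordK // eqxx mul1r big1 ?addr0 // => l hl.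
  have -> : (c == l :> nat) = false.
    apply/negP => /eqP e; move/eqP: hl; apply; apply: val_inj; rewrite /= inordK //.
  by rewrite mul0r.
rewrite big1 // => l _; have -> : (c == l :> nat) = false.
  by apply/negP => /eqP e; have := ltn_ord l; rewrite -e ltnNge hc.
by rewrite mul0r.
Qed.

Lemma sum_delta_r m (F : 'I_m.+1 -> K) c :
  \sum_(l < m.+1) F l * (c == l :> nat)%:R = if (c < m.+1)%N then F (inord c) else 0.
Proof. by rewrite -sum_delta_l; apply: eq_bigr => l _; rewrite mulrC. Qed.

Definition G m2 m1 (g : 'M[K]_(m2.+1, m1.+1)) (a b : nat) : K :=
  if (a < m2.+1)%N && (b < m1.+1)%N then g (inord a) (inord b) else 0.

Definition prevG m2 m1 (g : 'M[K]_(m2.+1, m1.+1)) (a b : nat) : K :=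
  if b is b'.+1 then G g a b' else 0.

Lemma entry_ad m2 m1 (g : 'M[K]_(m2.+1, m1.+1)) a b :
  (a < m2.+1)%N -> (b < m1.+1)%N ->
  hom_act (delta K m1.+1) (delta K m2.+1) g (inord a) (inord b) = G g a.+1 b - prevG g a b.
Proof.
move=> ha hb; rewrite /hom_act !mxE; congr (_ - _).
  rewrite (eq_bigr (fun l : 'I_m2.+1 => ((a.+1 == l :> nat)%:R * g l (inord b)))); last first.
    by move=> l _; rewrite mxE inordK.
  by rewrite sum_delta_l /G hb andbT.
case: b hb => [|b] hb /=.
  by rewrite big1 // => l _; rewrite mxE inordK //= mulr0.
rewrite (eq_bigr (fun l : 'I_m1.+1 => g (inord a) l * ((b == l :> nat)%:R))); last first.
  by move=> l _; rewrite mxE inordK // eqSS eq_sym.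
rewrite sum_delta_r /G ha /=; case: ifP => //; by move: hb; rewrite ltnS => /ltnW ->.
Qed.

Lemma G_out m2 m1 (g : 'M[K]_(m2.+1, m1.+1)) a b :
  ~~ ((a < m2.+1)%N && (b < m1.+1)%N) -> G g a b = 0.
Proof. by rewrite /G => /negbTE ->. Qed.

Lemma diagA m2 m1 (g : 'M[K]_(m2.+1, m1.+1)) (m : nat) :
  (forall a b, (a < m2.+1)%N -> (b < m1.+1)%N -> a = (b + m)%N -> G g a.+1 b = prevG g a b) ->
  forall b, G g (b + m.+1) b = 0.
Proof.
move=> hyp; elim=> [|b IH].
  case: (ltnP m m2.+1) => hm.
    by rewrite add0n (hyp m 0%N) //.
  by rewrite G_out //; apply/negP => /andP [h _]; lia.
case: (boolP ((b + m.+1 < m2.+1)%N && (b.+1 < m1.+1)%N)) => [/andP [h1 h2]|hn].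
  have -> : (b.+1 + m.+1 = (b + m.+1).+1)%N by lia.
  by rewrite (hyp _ _ h1 h2) //; lia.
rewrite G_out //; apply/negP => /andP [h1 h2]; move/negP: hn; apply; apply/andP; split; lia.
Qed.

Lemma diagB m2 m1 (g : 'M[K]_(m2.+1, m1.+1)) (m : nat) :
  (m2.+1 + m < m1.+1)%N ->
  (forall a b, (a < m2.+1)%N -> (b < m1.+1)%N -> b = (a + m.+1)%N -> G g a.+1 b = prevG g a b) ->
  forall a, G g a (a + m) = 0.
Proof.
move=> hm hyp.
suff: forall t a, (m2.+1 <= a + t)%N -> G g a (a + m) = 0 by move=> h a; apply: (h m2.+1); rewrite leq_addl.
elim=> [|t IH] a ha.
  by rewrite G_out //; apply/negP => /andP [h _]; lia.
case: (ltnP a m2.+1) => h1; last by rewrite G_out //; apply/negP => /andP [h _]; lia.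
have hb : (a + m.+1 < m1.+1)%N by lia.
have := hyp a (a + m.+1)%N h1 hb erefl.
rewrite /prevG addnS => <-.
have -> : ((a + m).+1 = a.+1 + m)%N by lia.
by apply: IH; lia.
Qed.

Lemma vanish m2 m1 (U : 'M[K]_(m2.+1, m1.+1) -> Prop) (D d0 : int) :
  (forall g, U g -> U (hom_act (delta K m1.+1) (delta K m2.+1) g)) ->
  (forall g, U g -> forall (i : 'I_m2.+1) (j : 'I_m1.+1),
      D + (i : nat)%:Z - (j : nat)%:Z < d0 -> g i j = 0) ->
  (forall k : int, d0 <= D + k -> 1 <= k \/ (m2.+1)%:Z - (m1.+1)%:Z < k) ->
  forall g, U g -> g = 0.
Proof.
move=> hcl hlow hgood.
have P : forall t : nat, forall g, U g -> forall (i : 'I_m2.+1) (j : 'I_m1.+1),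
    D + (i : nat)%:Z - (j : nat)%:Z < d0 + t%:Z -> g i j = 0.
  elim=> [|t IH] g Ug i j hij.
    by apply: hlow => //; move: hij; rewrite addr0.
  case: (ltP (D + (i : nat)%:Z - (j : nat)%:Z) (d0 + t%:Z)) => hlt.
    exact: IH.
  have Ug' := hcl g Ug.
  have rel : forall a b, (a < m2.+1)%N -> (b < m1.+1)%N ->
      a%:Z - b%:Z = (i : nat)%:Z - (j : nat)%:Z - 1 -> G g a.+1 b = prevG g a b.
    move=> a b ha hb hab; apply/eqP; rewrite -subr_eq0 -entry_ad //.
    apply/eqP; apply: (IH _ Ug'); rewrite !inordK //; lia.
  have gij : g i j = G g i j by rewrite /G !ltn_ord /= !inord_val.
  case: (ltnP j i) => hji.
    rewrite gij; have -> : (i : nat) = ((j : nat) + (i - (j : nat).+1).+1)%N by lia.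
    apply: diagA => a b ha hb hab; apply: rel => //; lia.
  have hd : d0 <= D + ((i : nat)%:Z - (j : nat)%:Z) by lia.
  case: (hgood _ hd) => hk; first by lia.
  rewrite gij; have -> : (j : nat) = ((i : nat) + (j - i))%N by lia.
  apply: diagB; first by lia.
  move=> a b ha hb hab; apply: rel => //; lia.
move=> g Ug; apply/matrixP => i j; rewrite mxE.
rewrite (P (absz (D + (i : nat)%:Z - (j : nat)%:Z - d0)%R).+1 g Ug) //; lia.
Qed.


Lemma ad_add n1 n2 (A1 : 'M[K]_n1) (A2 : 'M[K]_n2) f g :
  hom_act A1 A2 (f + g) = hom_act A1 A2 f + hom_act A1 A2 g.
Proof. by rewrite /hom_act mulmxDr mulmxDl opprD addrACA. Qed.

Lemma ad_scale n1 n2 (A1 : 'M[K]_n1) (A2 : 'M[K]_n2) c f :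
  hom_act A1 A2 (c *: f) = c *: hom_act A1 A2 f.
Proof. by rewrite /hom_act -scalemxAr -scalemxAl scalerBr. Qed.

Lemma ad0 n1 n2 (A1 : 'M[K]_n1) (A2 : 'M[K]_n2) : hom_act A1 A2 0 = 0.
Proof. by rewrite /hom_act mulmx0 mul0mx subrr. Qed.

Lemma ad_lie n1 n2 (A1 B1 : 'M[K]_n1) (A2 B2 : 'M[K]_n2) f :
  hom_act A1 A2 (hom_act B1 B2 f) - hom_act B1 B2 (hom_act A1 A2 f)
  = hom_act (A1 *m B1 - B1 *m A1) (A2 *m B2 - B2 *m A2) f.
Proof.
rewrite /hom_act !mulmxBr !mulmxBl !mulmxA.
apply/matrixP => i j; rewrite !mxE; ring.
Qed.

Lemma subE m n (A B : 'M[K]_(m, n)) i j : (A - B) i j = A i j - B i j.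
Proof. by rewrite !mxE. Qed.
Lemma addE m n (A B : 'M[K]_(m, n)) i j : (A + B) i j = A i j + B i j.
Proof. by rewrite !mxE. Qed.
Lemma scaleE m n c (A : 'M[K]_(m, n)) i j : (c *: A) i j = c * A i j.
Proof. by rewrite !mxE. Qed.

Lemma diag_mull n p (H : 'M[K]_n) (g : 'M[K]_(n, p)) i j :
  (forall i j : 'I_n, i != j -> H i j = 0) -> (H *m g) i j = H i i * g i j.
Proof.
move=> hd; rewrite mxE (bigD1 i) //= big1 ?addr0 // => l hl.
by rewrite hd ?mul0r // eq_sym.
Qed.

Lemma diag_mulr n p (H : 'M[K]_n) (g : 'M[K]_(p, n)) i j :
  (forall i j : 'I_n, i != j -> H i j = 0) -> (g *m H) i j = g i j * H j j.
Proof.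
move=> hd; rewrite mxE (bigD1 j) //= big1 ?addr0 // => l hl.
by rewrite hd ?mulr0.
Qed.

Lemma H_step m (H : 'M[K]_m.+1) :
  (forall i j : 'I_m.+1, i != j -> H i j = 0) ->
  H *m delta K m.+1 - delta K m.+1 *m H = delta K m.+1 *+ 2 ->
  forall a, (a.+1 < m.+1)%N -> H (inord a) (inord a) - H (inord a.+1) (inord a.+1) = 2.
Proof.
move=> hd hr a ha.
have := congr1 (fun M : 'M[K]_m.+1 => M (inord a) (inord a.+1)) hr => /=.
rewrite subE diag_mull // diag_mulr // mulmxnE !mxE !inordK ?eqxx //; last by lia.
by rewrite mulr1 mul1r.
Qed.

Lemma H_val m (H : 'M[K]_m.+1) :
  (forall i j : 'I_m.+1, i != j -> H i j = 0) ->
  H *m delta K m.+1 - delta K m.+1 *m H = delta K m.+1 *+ 2 ->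
  forall a, (a < m.+1)%N -> H (inord a) (inord a) = H ord0 ord0 - 2 * a%:R.
Proof.
move=> hd hr; elim=> [|a IH] ha.
  by rewrite mulr0 subr0; congr (H _ _); apply: val_inj; rewrite /= inordK.
have := H_step hd hr ha; rewrite IH; last by lia.
set x := H (inord a.+1) (inord a.+1) => e.
have -> : x = (H ord0 ord0 - 2 * a%:R) - (H ord0 ord0 - 2 * a%:R - x) by ring.
rewrite e -natr1; ring.
Qed.

Lemma ad_scaleA n1 n2 (A1 : 'M[K]_n1) (A2 : 'M[K]_n2) c f :
  hom_act (c *: A1) (c *: A2) f = c *: hom_act A1 A2 f.
Proof. by rewrite /hom_act scalerBr scalemxAl -scalemxAr. Qed.

Lemma neg2E n (A : 'M[K]_n) : - (A *+ 2) = (- 2) *: A.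
Proof. by rewrite scaleNr scaler_nat. Qed.

Lemma adY_nonneg m1 m2 (r1 r2 : int) (Y1 : 'M[K]_m1) (Y2 : 'M[K]_m2) g :
  (forall i j : 'I_m1, (i : nat) != j.+1 -> Y1 i j = 0) ->
  (forall i j : 'I_m2, (i : nat) != j.+1 -> Y2 i j = 0) ->
  nonneg_deg r1 r2 g -> nonneg_deg r1 r2 (hom_act Y1 Y2 g).
Proof.
move=> hY1 hY2 hg i j hij; rewrite subE !mxE.
rewrite big1 ?sub0r; last first.
  move=> l _; case: (eqVneq (i : nat) l.+1) => e; last by rewrite hY2 // mul0r.
  by rewrite hg ?mulr0 //; lia.
rewrite big1 ?oppr0 // => l _; case: (eqVneq (l : nat) j.+1) => e; last by rewrite hY1 // mulr0.
by rewrite hg ?mul0r //; lia.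
Qed.

Section Witness.
Variables (m1 m2 : nat) (r1 r2 : int).
Variables (H1 Y1 : 'M[K]_m1.+1) (H2 Y2 : 'M[K]_m2.+1).
Hypothesis t1 : sl2_triple H1 Y1.
Hypothesis t2 : sl2_triple H2 Y2.
Hypothesis hdeg : ((m1.+1 - m2.+1)%N)%:Z <= r2 - r1.

Let e := (m1.+1 - m2.+1)%N.
Definition g0 : 'M[K]_(m2.+1, m1.+1) :=
  \matrix_(i < m2.+1, j < m1.+1) (((i + e)%N == j :> nat)%:R).

Let adY := hom_act Y1 Y2.
Let adH := hom_act H1 H2.
Let adD := hom_act (delta K m1.+1) (delta K m2.+1).

Definition bb k := iter k adY g0.

Lemma g0_ne0 : g0 != 0.
Proof.
apply/negP => /eqP /matrixP /(_ ord0 (inord e)); rewrite !mxE inordK /= ?add0n ?eqxx; last by rewrite /e; lia.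
by move/eqP; rewrite oner_eq0.
Qed.

Lemma g0_nonneg : nonneg_deg r1 r2 g0.
Proof.
move=> i j hij; rewrite mxE; case: eqP => // hE; move: hdeg hij; rewrite -/e; lia.
Qed.

Lemma Gg0 a b : G g0 a b = if [&& (a < m2.+1)%N, (b < m1.+1)%N & (a + e == b)%N] then 1 else 0.
Proof.
rewrite /G; case: (boolP (a < _)%N) => ha; case: (boolP (b < _)%N) => hb //=.
by rewrite mxE !inordK //; case: eqP.
Qed.

Lemma g0_D : adD g0 = 0.
Proof.
apply/matrixP => i j; rewrite [RHS]mxE -[i]inord_val -[j]inord_val /adD entry_ad //.
apply/eqP; rewrite subr_eq0; apply/eqP; rewrite /prevG.
have hi := ltn_ord i; have hj := ltn_ord j.
case: (nat_of_ord j) hj => [|b] hb; rewrite !Gg0.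
  by case: ifP => // /and3P [_ _ /eqP]; lia.
have E : [&& (i.+1 < m2.+1)%N, (b.+1 < m1.+1)%N & (i.+1 + e == b.+1)%N]
         = [&& (i < m2.+1)%N, (b < m1.+1)%N & (i + e == b)%N].
  apply/idP/idP => /and3P [h1 h2 /eqP h3]; apply/and3P; split; try apply/eqP; rewrite /e in h3 *; lia.
by rewrite E.
Qed.

Definition lam := H2 ord0 ord0 - H1 ord0 ord0 + 2 * e%:R.

Lemma g0_H : adH g0 = lam *: g0.
Proof.
case: t1 => hd1 _ hr1 _ _; case: t2 => hd2 _ hr2 _ _.
apply/matrixP => i j; rewrite /adH /hom_act subE diag_mull // diag_mulr // !mxE.
case: eqP => hij; last by rewrite !mulr0 mul0r subr0.
rewrite -[in H2 i i](inord_val i) -[in H1 j j](inord_val j).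
rewrite (H_val hd1 hr1) // (H_val hd2 hr2) // -hij natrD /lam; ring.
Qed.

Lemma lieHY f : adH (adY f) - adY (adH f) = (- 2) *: adY f.
Proof.
case: t1 => _ _ _ h1 _; case: t2 => _ _ _ h2 _.
by rewrite /adH /adY ad_lie h1 h2 !neg2E ad_scaleA.
Qed.

Lemma lieDY f : adD (adY f) - adY (adD f) = adH f.
Proof.
case: t1 => _ _ _ _ h1; case: t2 => _ _ _ _ h2.
by rewrite /adD /adY ad_lie h1 h2.
Qed.

Lemma bb_H k : adH (bb k) = (lam - 2 * k%:R) *: bb k.
Proof.
elim: k => [|k IH]; first by rewrite mulr0 subr0 g0_H.
have := lieHY (bb k); rewrite IH /adY ad_scale -/adY => e1.
have -> : adH (bb k.+1) = adH (adY (bb k)) by [].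
rewrite -[adH (adY (bb k))](subrK ((lam - 2 * k%:R) *: adY (bb k))) e1.
rewrite -scalerDl -natr1; congr (_ *: _); ring.
Qed.

Lemma bb_D0 : adD (bb 0) = 0.
Proof. exact: g0_D. Qed.

Lemma bb_D k : exists c, adD (bb k.+1) = c *: bb k.
Proof.
elim: k => [|k [c IH]].
  exists lam; have := lieDY (bb 0); rewrite bb_D0 /adY ad0 subr0 => ->.
  by rewrite -/adH bb_H mulr0 subr0.
exists (c + (lam - 2 * k.+1%:R)).
have := lieDY (bb k.+1); rewrite IH bb_H => e1.
have -> : adD (bb k.+2) = adD (adY (bb k.+1)) by [].
by rewrite -[adD (adY _)](subrK (adY (c *: bb k))) e1 /adY ad_scale scalerDl addrC.
Qed.

Lemma bb_nonneg k : nonneg_deg r1 r2 (bb k).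
Proof.
case: t1 => _ hy1 _ _ _; case: t2 => _ hy2 _ _ _.
elim: k => [|k IH]; first exact: g0_nonneg.
exact: adY_nonneg.
Qed.


Definition TT (f : 'M[K]_(m2.+1, m1.+1)) : Prop :=
  exists n (c : nat -> K), f = \sum_(i < n) c i *: bb i.

Lemma TT0 : TT 0.
Proof. by exists 0%N, (fun _ => 0); rewrite big_ord0. Qed.

Lemma pad n q (c : nat -> K) : (n <= q)%N ->
  \sum_(i < q) (if (i < n)%N then c i else 0) *: bb i = \sum_(i < n) c i *: bb i.
Proof.
move=> hnq; rewrite (big_ord_widen q (fun i => c i *: bb i)) // [RHS]big_mkcond.
by apply: eq_bigr => i _; case: ifP => _ //; rewrite scale0r.
Qed.

Lemma TTadd f g : TT f -> TT g -> TT (f + g).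
Proof.
move=> [n [c ->]] [p [d ->]].
exists (maxn n p), (fun i => (if (i < n)%N then c i else 0) + (if (i < p)%N then d i else 0)).
rewrite -(pad c (leq_maxl n p)) -(pad d (leq_maxr n p)) -big_split /=.
by apply: eq_bigr => i _; rewrite scalerDl.
Qed.

Lemma TTscale a f : TT f -> TT (a *: f).
Proof.
move=> [n [c ->]]; exists n, (fun i => a * c i).
by rewrite scaler_sumr; apply: eq_bigr => i _; rewrite scalerA.
Qed.

Lemma TTsum n (F : 'I_n -> 'M[K]_(m2.+1, m1.+1)) : (forall i, TT (F i)) -> TT (\sum_(i < n) F i).
Proof.
elim: n F => [|n IH] F hF; first by rewrite big_ord0; exact: TT0.
by rewrite big_ord_recr /=; apply: TTadd => //; apply: IH.
Qed.

Lemma TTb k : TT (bb k).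
Proof.
exists k.+1, (fun i => (i == k)%:R); rewrite big_ord_recr /= eqxx scale1r big1 ?add0r //.
by move=> i _; rewrite (_ : (i == k :> nat) = false) ?scale0r //; apply/negbTE; rewrite neq_ltn ltn_ord.
Qed.

Lemma TTlin (L : 'M[K]_(m2.+1, m1.+1) -> 'M[K]_(m2.+1, m1.+1)) :
  (forall x y, L (x + y) = L x + L y) -> (forall a x, L (a *: x) = a *: L x) ->
  (forall k, TT (L (bb k))) -> forall f, TT f -> TT (L f).
Proof.
move=> hadd hsc hb f [n [c ->]].
have -> : L (\sum_(i < n) c i *: bb i) = \sum_(i < n) c i *: L (bb i).
  elim: n => [|n IH]; last by rewrite !big_ord_recr /= hadd IH hsc.
  by rewrite !big_ord0; have := hsc 0 0; rewrite !scale0r.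
by apply: TTsum => i; apply: TTscale.
Qed.

Lemma TT_sub : sl2_submodule H1 Y1 H2 Y2 TT.
Proof.
split; [exact: TT0 | exact: TTadd | exact: TTscale |].
move=> f Tf; split.
- apply: (TTlin (L := adD)) => //; [exact: ad_add | exact: ad_scale |].
  case=> [|k]; first by rewrite bb_D0; exact: TT0.
  by have [c ->] := bb_D k; apply: TTscale; apply: TTb.
- apply: (TTlin (L := adH)) => //; [exact: ad_add | exact: ad_scale |].
  by move=> k; rewrite bb_H; apply: TTscale; apply: TTb.
- apply: (TTlin (L := adY)) => //; [exact: ad_add | exact: ad_scale |].
  by move=> k; apply: (TTb k.+1).
Qed.

Lemma TT_nonneg f : TT f -> nonneg_deg r1 r2 f.
Proof.
move=> [n [c ->]] i j hij; rewrite summxE big1 // => k _.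
by rewrite scaleE bb_nonneg ?mulr0.
Qed.

Lemma witness : exists S f, [/\ sl2_submodule H1 Y1 H2 Y2 S,
   (forall g, S g -> nonneg_deg r1 r2 g), S f & f != 0].
Proof.
exists TT, g0; split; [exact: TT_sub | exact: TT_nonneg | exact: (TTb 0) | exact: g0_ne0].
Qed.

End Witness.
End Gen.

Section Part2.
Variable K : fieldType.
Hypothesis charK0 : [pchar K] =i pred0.

Lemma ad_scalar n (A : 'M[K]_n) c : hom_act A A (c%:M) = 0.
Proof. by rewrite /hom_act mul_mx_scalar mul_scalar_mx subrr. Qed.

Lemma diagconst m (r : int) (x : 'M[K]_m.+1) :
  nonneg_deg r r x -> nonneg_deg r r (hom_act (delta K m.+1) (delta K m.+1) x) ->
  forall i, x i i = x ord0 ord0.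
Proof.
move=> hx hdx.
suff h : forall a, (a < m.+1)%N -> x (inord a) (inord a) = x ord0 ord0.
  by move=> i; rewrite -(h i (ltn_ord i)) inord_val.
elim=> [|a IH] ha; first by congr (x _ _); apply: val_inj; rewrite /= inordK.
have ha' : (a < m.+1)%N by lia.
have e0 : hom_act (delta K m.+1) (delta K m.+1) x (inord a) (inord a.+1) = 0.
  by apply: hdx; rewrite !inordK //; lia.
rewrite entry_ad // /prevG /G ha ha' /= in e0.
by rewrite -IH //; apply/eqP; rewrite -subr_eq0 e0.
Qed.

Lemma part2 m (r : int) (H Y : 'M[K]_m.+1) (S : 'M[K]_m.+1 -> Prop) :
  sl2_submodule H Y H Y S -> (forall g, S g -> nonneg_deg r r g) ->
  forall f, S f -> f = (f ord0 ord0)%:M.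
Proof.
move=> [S0 Sadd Ssc Sact] Snn f Sf.
have SD : forall g, S g -> S (hom_act (delta K m.+1) (delta K m.+1) g).
  by move=> g /Sact [].
pose U h := (exists g c, S g /\ h = g + c%:M) /\ (forall i, h i i = 0).
have UD : forall h, U h -> U (hom_act (delta K m.+1) (delta K m.+1) h).
  move=> h [[g [c [Sg ->]]] _]; rewrite ad_add ad_scalar addr0.
  set y := hom_act _ _ g.
  have Sy : S y by apply: SD.
  have dc := diagconst (Snn _ Sy) (Snn _ (SD _ Sy)).
  have y0 : y ord0 ord0 = 0.
    have : \tr y = 0 by rewrite /y /hom_act raddfB /= mxtrace_mulC subrr.
    rewrite /mxtrace (eq_bigr (fun _ => y ord0 ord0)) => [|i _]; last exact: dc.
    rewrite sumr_const card_ord -mulr_natr => /eqP; rewrite mulf_eq0.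
    by rewrite ((pcharf0P K).1 charK0) /= orbF => /eqP.
  split; first by exists y, 0; split => //; rewrite raddf0 addr0.
  by move=> i; rewrite dc.
have Ulow : forall h, U h -> forall i j : 'I_m.+1, 0 + (i : nat)%:Z - (j : nat)%:Z < 1 -> h i j = 0.
  move=> h [[g [c [Sg ->]]] hd] i j hij.
  case: (eqVneq i j) => [eij|nij]; first by move: (hd i); rewrite {2}eij.
  have hne : (i : nat) <> j by move=> e; move/eqP: nij; apply; apply: val_inj.
  rewrite addE (Snn _ Sg); last by lia.
  by rewrite mxE (negbTE nij) mulr0n add0r.
have Uf : U (f - (f ord0 ord0)%:M).
  split; first by exists f, (- f ord0 ord0); split => //; rewrite raddfN.
  move=> i; rewrite subE mxE eqxx mulr1n (diagconst (Snn _ Sf) (Snn _ (SD _ Sf))) subrr //.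
have := vanish UD Ulow _ Uf.
by move=> h; apply/eqP; rewrite -subr_eq0; apply/eqP; apply: h => k hk; left; lia.
Qed.
End Part2.

Lemma dimVE (r s : int) : r <= s -> (dimV r s)%:Z = s - r + 1.
Proof. by move=> h; have -> : dimV r s = (absz (s - r)).+1 by []; lia. Qed.

Unset Implicit Arguments.

Theorem mainTheorem13 (K : fieldType) (charK0 : [pchar K] =i pred0) :
  (forall (r1 s1 r2 s2 : int),
     r1 <= s1 -> s1 < 0 -> r2 <= s2 -> s2 < 0 ->
     forall (H1 Y1 : 'M[K]_(dimV r1 s1)) (H2 Y2 : 'M[K]_(dimV r2 s2)),
     sl2_triple H1 Y1 -> sl2_triple H2 Y2 ->
     ((forall f, in_frak_n r1 s1 r2 s2 H1 Y1 H2 Y2 f -> f = 0)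
        <-> (s2 < s1 \/ r2 < r1)))
  /\
  (forall (r s : int), r <= s -> s < 0 ->
     forall (H Y : 'M[K]_(dimV r s)), sl2_triple H Y ->
     forall f, in_frak_n r s r s H Y H Y f <-> exists c : K, f = c%:M).
Proof.
split.
  move=> r1 s1 r2 s2 hrs1 _ hrs2 _ H1 Y1 H2 Y2 t1 t2.
  have e1 : (absz (s1 - r1))%:Z = s1 - r1 by lia.
  have e2 : (absz (s2 - r2))%:Z = s2 - r2 by lia.
  split.
    move=> hyp; case: (ltP s2 s1) => h1; first by left.
    case: (ltP r2 r1) => h2; first by right.
    exfalso.
    have hdeg : (((absz (s1 - r1)).+1 - (absz (s2 - r2)).+1)%N)%:Z <= r2 - r1 by lia.
    have [S [f [Ssub Snn Sf fne]]] := witness t1 t2 hdeg.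
    by move/eqP: fne; apply; apply: hyp; exists S; split.
  move=> hor f [S [Ssub Snn Sf]].
  case: Ssub => _ _ _ Sact.
  apply: (vanish (U := S) (D := r2 - r1) (d0 := 0)) Sf.
  - by move=> g /Sact [].
  - move=> g Sg i j hij; apply: (Snn g Sg).
    change (r2 + (nat_of_ord i)%:Z < r1 + (nat_of_ord j)%:Z); lia.
  - move=> k hk; have := dimVE hrs1; have := dimVE hrs2; rewrite /dimV => d2 d1; lia.
move=> r s hrs _ H Y t f; split.
  move=> [S [Ssub Snn Sf]]; exists (f ord0 ord0).
  exact: (part2 charK0 Ssub Snn Sf).
move=> [c ->]; exists (fun g => exists c : K, g = c%:M); split; last by exists c.
- split.
  + by exists 0; rewrite raddf0.
  + by move=> _ _ [a ->] [b ->]; exists (a + b); rewrite raddfD.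
  + by move=> a _ [b ->]; exists (a * b); rewrite scale_scalar_mx.
  + by move=> _ [b ->]; split; exists 0; rewrite ad_scalar raddf0.
- move=> _ [b ->] i j hij; rewrite mxE.
  have : (i : nat) <> j by move=> e; rewrite e in hij; rewrite ltxx in hij.
  by case: eqP => // e; rewrite -e.
Qed.
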